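(* Let $L\subset\mathfrak{sl}_2(\mathbb{C}[\lambda])$ be a Lie subalgebra of finite codimension. Then the associative algebra $\mathcal{I}(L)$ is commutative and is isomorphic to the field $\mathbb{C}(\lambda)$ of rational functions in $\lambda$.
   Context: $\mathfrak{sl}_2(\mathbb{C}[\lambda])=\mathfrak{sl}_2(\mathbb{C})\otimes_{\mathbb{C}}\mathbb{C}[\lambda]$ with bracket $[y_1\otimes f_1,y_2\otimes f_2]=[y_1,y_2]\otimes f_1f_2$. For a Lie algebra $\mathfrak{L}$ over $\mathbb{C}$, an admissible pair is $(h,\mathfrak{h})$ with $\mathfrak{h}\subset\mathfrak{L}$ a Lie subalgebra of finite codimension and $h\colon\mathfrak{h}\to\mathfrak{L}$ linear with $h([p_1,p_2])=[h(p_1),p_2]=[p_1,h(p_2)]$ for all $p_1,p_2\in\mathfrak{h}$. Two admissible pairs $(h,\mathfrak{h}),(\tilde h,\tilde{\mathfrak{h}})$ are equivalent if $h$ and $\tilde h$ agree on some subalgebra of finite codimension contained in $\mathfrak{h}\cap\tilde{\mathfrak{h}}$. $\mathcal{I}(\mathfrak{L})$ is the set of equivalence classes, an associative algebra with $c[(h,\mathfrak{h})]=[(ch,\mathfrak{h})]$, $[(h_1,\mathfrak{h}_1)]+[(h_2,\mathfrak{h}_2)]=[(h_1+h_2,\mathfrak{h}_1\cap\mathfrak{h}_2)]$, and $[(h_1,\mathfrak{h}_1)]\cdot[(h_2,\mathfrak{h}_2)]=[(h_1\circ h_2,\hat{\mathfrak{h}})]$ with $\hat{\mathfrak{h}}=\{w\in\mathfrak{h}_1\cap\mathfrak{h}_2: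 h_2(w)\in\mathfrak{h}_1\}$. *)

(* Defs.v *)
From HB Require Import structures.
From mathcomp Require Import all_boot all_order all_algebra.
From mathcomp Require Import fraction.
From mathcomp Require Import reals.
From mathcomp.real_closed Require Import complex.
Set Implicit Arguments. Unset Strict Implicit. Unset Printing Implicit Defensive.
Import Order.TTheory GRing.Theory Num.Theory.
Local Open Scope ring_scope.

Definition Cx (R : realType) : fieldType := R[i].

(* sl_2(C[lambda]) is realised as the traceless 2x2 matrices over C[lambda];
   this is the standard identification sl_2(C) (x)_C C[lambda] = sl_2(C[lambda]),
   with bracket [y1 (x) f1, y2 (x) f2] = [y1,y2] (x) f1 f2 = commutator. *)
Definition Mat (R : realType) := 'M[{poly Cx R}]_2.

Section Defs.
Variable R : realType.
Local Notation C := (Cx R).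
Local Notation M := (Mat R).

Definition lbr (x y : M) : M := x *m y - y *m x.
Definition csc (c : C) (x : M) : M := c%:P *: x.

Definition sl2 : M -> Prop := fun x => \tr x = 0.

Definition subspace (A : M -> Prop) : Prop :=
  A 0 /\ (forall x y, A x -> A y -> A (x + y)) /\
  (forall (c : C) x, A x -> A (csc c x)).

Definition lie_subalg (A B : M -> Prop) : Prop :=
  (forall x, A x -> B x) /\ subspace A /\
  (forall x y, A x -> A y -> A (lbr x y)).

Definition fin_codim (A B : M -> Prop) : Prop :=
  exists (n : nat) (v : 'I_n -> M), (forall i, B (v i)) /\
    forall x, B x -> exists c : 'I_n -> C, A (x - \sum_(i < n) csc (c i) (v i)).

Definition fc_subalg (A B : M -> Prop) : Prop := lie_subalg A B /\ fin_codim A B.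

(* pairs (h, hh): hh a subset, h a map (relevant only on hh) *)
Definition pair := ((M -> M) * (M -> Prop))%type.

Definition admissible (L : M -> Prop) (p : pair) : Prop :=
  let: (h, hh) := p in
  fc_subalg hh L /\
  (forall x, hh x -> L (h x)) /\
  (forall (c : C) x y, hh x -> hh y -> h (csc c x + y) = csc c (h x) + h y) /\
  (forall x y, hh x -> hh y ->
     h (lbr x y) = lbr (h x) y /\ h (lbr x y) = lbr x (h y)).

Definition pequiv (L : M -> Prop) (p q : pair) : Prop :=
  exists kk : M -> Prop, fc_subalg kk L /\
    (forall x, kk x -> p.2 x /\ q.2 x) /\
    (forall x, kk x -> p.1 x = q.1 x).

Definition padd (p q : pair) : pair :=
  (fun x => p.1 x + q.1 x, fun x => p.2 x /\ q.2 x).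
Definition pscale (c : C) (p : pair) : pair := (fun x => csc c (p.1 x), p.2).
Definition pmul (p q : pair) : pair :=
  (fun x => p.1 (q.1 x), fun x => p.2 x /\ q.2 x /\ p.2 (q.1 x)).

(* Phi induces an isomorphism of associative C-algebras
   I(L) = {admissible pairs}/pequiv  -->  K *)
Definition induces_alg_iso (L : M -> Prop) (K : fieldType)
    (emb : C -> K) (Phi : pair -> K) : Prop :=
  (* well defined and injective on equivalence classes *)
  (forall p q, admissible L p -> admissible L q -> (pequiv L p q <-> Phi p = Phi q)) /\
  (forall r : K, exists p, admissible L p /\ Phi p = r) /\
  (forall p q, admissible L p -> admissible L q -> Phi (padd p q) = Phi p + Phi q) /\
  (forall (c : C) p, admissible L p -> Phi (pscale c p) = emb c * Phi p) /\
  (forall p q, admissible L p -> admissible L q -> Phi (pmul p q) = Phi p * Phi q).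

Definition cemb (c : C) : {fraction {poly C}} := FracField.tofrac (c%:P).

End Defs.

(* Main.v *)
Require Import Defs.
From HB Require Import structures.
From mathcomp Require Import all_boot all_order all_algebra.
From mathcomp Require Import fraction.
From mathcomp Require Import reals.
From mathcomp Require Import generic_quotient ring.
From mathcomp.real_closed Require Import complex.
From Stdlib Require Import Classical ClassicalEpsilon.
Set Implicit Arguments. Unset Strict Implicit. Unset Printing Implicit Defensive.
Import Order.TTheory GRing.Theory Num.Theory.
Local Open Scope ring_scope.

Section Fc.
Variable R : realType.
Local Notation C := (Cx R).
Local Notation M := (Mat R).

Lemma csc1 (x : M) : csc 1 x = x.
Proof. by rewrite /csc polyC1 scale1r. Qed.
Lemma csc0r (c : C) : csc c (0 : M) = 0.
Proof. by rewrite /csc scaler0. Qed.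
Lemma csc0l (x : M) : csc 0 x = 0.
Proof. by rewrite /csc polyC0 scale0r. Qed.
Lemma cscA (c d : C) (x : M) : csc c (csc d x) = csc (c * d) x.
Proof. by rewrite /csc scalerA polyCM. Qed.
Lemma cscDr (c : C) (x y : M) : csc c (x + y) = csc c x + csc c y.
Proof. by rewrite /csc scalerDr. Qed.
Lemma cscDl (c d : C) (x : M) : csc (c + d) x = csc c x + csc d x.
Proof. by rewrite /csc polyCD scalerDl. Qed.
Lemma cscN (c : C) (x : M) : csc (- c) x = - csc c x.
Proof. by rewrite /csc polyCN scaleNr. Qed.

Lemma fc_trans (A B' B : M -> Prop) : fin_codim A B' -> fin_codim B' B ->
  (forall x, B' x -> B x) -> fin_codim A B.
Proof.
move=> [n [v [vB' Hv]]] [m [u [uB Hu]]] sub.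
exists (m + n), (fun k => match split k with inl i => u i | inr j => v j end); split.
  by move=> k; case: (split k) => [i|j]; [exact: uB | exact: sub (vB' j)].
move=> x /Hu [d Hd]; have [c Hc] := Hv _ Hd.
exists (fun k => match split k with inl i => d i | inr j => c j end).
rewrite big_split_ord /=.
have Sl i : split (lshift n i) = inl i := unsplitK (inl i).
have Sr j : split (rshift m j) = inr j := unsplitK (inr j).
rewrite (eq_bigr (fun i => csc (d i) (u i))); last by move=> i _; rewrite Sl.
rewrite (eq_bigr (fun j => csc (c j) (v j))); last by move=> j _; rewrite Sr.
by rewrite opprD addrA.
Qed.

Lemma fc_refl (B : M -> Prop) : B 0 -> fin_codim B B.
Proof.
move=> B0; exists 0%N, (fun _ => 0); split => // x Bx; exists (fun _ => 0).
by rewrite big_ord0 subr0.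
Qed.

Definition glin (D : M -> Prop) (g : M -> M) :=
  forall (c : C) x y, D x -> D y -> g (csc c x + y) = csc c (g x) + g y.

Lemma fc_pre (D : M -> Prop) (g : M -> M) n : subspace D -> glin D g ->
  forall (A : M -> Prop) (v : 'I_n -> M), subspace A ->
  (forall x, D x -> exists c : 'I_n -> C, A (g x - \sum_(i < n) csc (c i) (v i))) ->
  fin_codim (fun x => D x /\ A (g x)) D.
Proof.
move=> [D0 [DD DS]] gl; elim: n => [|n IH] A v [A0 [AD AS]] H.
  exists 0%N, (fun _ => 0); split => // x Dx; exists (fun _ => 0).
  rewrite big_ord0 subr0; split => //.
  by have [c] := H x Dx; rewrite big_ord0 subr0.
pose w := v ord_max.
pose A' := fun y => exists a c, A a /\ y = a + csc c w.
have sA' : subspace A'.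
  split; first by exists 0, 0; rewrite csc0l addr0.
  split.
    move=> x y [a [c [Aa ->]]] [a' [c' [Aa' ->]]]; exists (a + a'), (c + c').
    by split; [exact: AD | rewrite cscDl addrACA].
  move=> k x [a [c [Aa ->]]]; exists (csc k a), (k * c).
  by split; [exact: AS | rewrite cscDr cscA].
have := IH A' (fun i => v (widen_ord (leqnSn n) i)) sA'.
case.
  move=> x Dx; have [c Hc] := H x Dx; exists (fun i => c (widen_ord (leqnSn n) i)).
  rewrite big_ord_recr /= in Hc.
  exists (g x - (\sum_(i < n) csc (c (widen_ord (leqnSn n) i)) (v (widen_ord (leqnSn n) i)) + csc (c ord_max) (v ord_max))), (c ord_max).
  by split => //; rewrite opprD addrA subrK.
move=> m [u [uD Hu]].
set D' := fun x => D x /\ A' (g x).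
have D'D : forall x, D' x -> D x by move=> x [].
suff : fin_codim (fun x => D x /\ A (g x)) D'.
  move=> Hf; apply: (fc_trans Hf) => //; exists m, u; split => //.
case: (classic (exists x0 a0 c0, D' x0 /\ A a0 /\ g x0 = a0 + csc c0 w /\ c0 != 0)).
  move=> [x0 [a0 [c0 [D'x0 [Aa0 [gx0 c00]]]]]].
  exists 1%N, (fun _ => x0); split => // y [Dy [a [c [Aa gy]]]].
  exists (fun _ => c / c0); rewrite big_ord1.
  have E : y - csc (c / c0) x0 = csc (- (c / c0)) x0 + y by rewrite cscN addrC.
  rewrite E; split; first by apply: DD => //; apply: DS; case: D'x0.
  rewrite gl //; last by case: D'x0.
  rewrite gx0 gy cscDr cscA mulNr divfK // cscN cscN.
  have -> : - csc (c / c0) a0 + - csc c w + (a + csc c w) = - csc (c / c0) a0 + a.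
    by rewrite addrACA addNr addr0.
  rewrite -cscN.
  by apply: AD => //; apply: AS.
move=> Hno; exists 0%N, (fun _ => 0); split => //.
  by case.
move=> y [Dy [a [c [Aa gy]]]]; exists (fun _ => 0); rewrite big_ord0 subr0.
split => //.
case: (eqVneq c 0) => [c0|cn0]; first by rewrite gy c0 csc0l addr0.
exfalso; apply: Hno; exists y, a, c; split; last by [].
by split => //; exists a, c.
Qed.


Lemma pre_fc (L B D A : M -> Prop) (g : M -> M) :
  fc_subalg D L -> subspace A ->
  (exists n (v : 'I_n -> M), forall z, B z ->
     exists c : 'I_n -> C, A (z - \sum_(i < n) csc (c i) (v i))) ->
  (forall x, D x -> B (g x)) -> glin D g ->
  (forall x y, D x -> D y -> A (g x) -> A (g y) -> A (g (lbr x y))) ->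
  fc_subalg (fun x => D x /\ A (g x)) L.
Proof.
move=> [[DL [sD Dbr]] fcD] sA [n [v Hv]] gL gl gbr.
have [D0 [DD DS]] := sD; have [A0 [AD AS]] := sA.
have g0 : g 0 = 0.
  have := gl 1 0 0 D0 D0; rewrite csc0r add0r csc1.
  by move/esym/eqP; rewrite -subr_eq0 addrK => /eqP.
have gD x y : D x -> D y -> g (x + y) = g x + g y.
  by move=> Dx Dy; have := gl 1 x y Dx Dy; rewrite !csc1.
have gS c x : D x -> g (csc c x) = csc c (g x).
  by move=> Dx; have := gl c x 0 Dx D0; rewrite !addr0 g0 addr0.
split; first split.
- by move=> x [Dx _]; exact: DL.
- split; first split.
  + by split => //; rewrite g0.
  + split.
    * by move=> x y [Dx Ax] [Dy Ay]; split; [exact: DD | rewrite gD //; exact: AD].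
    * by move=> c x [Dx Ax]; split; [exact: DS | rewrite gS //; exact: AS].
  + by move=> x y [Dx Ax] [Dy Ay]; split; [exact: Dbr | exact: gbr].
- apply: (fc_trans _ fcD DL).
  apply: (fc_pre sD gl (v := v) sA) => x Dx.
  exact: Hv (gL x Dx).
Qed.

Lemma tr_delta (i j : 'I_2) : i != j -> \tr (delta_mx i j : M) = 0.
Proof.
move=> ij; rewrite /mxtrace big1 // => k _; rewrite mxE.
by case: (eqVneq k i) => [->|] //=; rewrite (negbTE ij).
Qed.

Lemma nz_elem (kk : M -> Prop) (i j : 'I_2) : i != j -> subspace kk ->
  fin_codim kk (@sl2 R) -> exists a, a != 0 /\ kk (a *: delta_mx i j).
Proof.
move=> ij skk [n [v [_ Hv]]].
pose D := fun x : M => exists a, x = a *: delta_mx i j.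
have sD : subspace D.
  split; first by exists 0; rewrite scale0r.
  split; first by move=> x y [a ->] [b ->]; exists (a + b); rewrite scalerDl.
  by move=> c x [a ->]; exists (c%:P * a); rewrite /csc scalerA.
have glid : glin D id by [].
have [m [u [uD Hu]]] := fc_pre sD glid skk (v := v)
   (fun x Dx => Hv x (let: ex_intro a Ea := Dx in
       eq_ind_r (fun z => \tr z = 0) (etrans (mxtraceZ _ _) (etrans (congr1 _ (tr_delta ij)) (mulr0 _))) Ea)).
pose N := (\max_(k < m) size (u k i j))%N.
have [d [[a Ea] Ky]] := Hu ('X^N *: delta_mx i j) (ex_intro _ _ erefl).
exists a; split; last by rewrite -Ea.
have : a = ('X^N *: delta_mx i j - \sum_(k < m) csc (d k) (u k)) i j.
  by rewrite Ea mxE mxE !eqxx mulr1.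
move/(congr1 (fun p : {poly C} => p`_N)).
rewrite mxE mxE mxE !eqxx mulr1 mxE summxE coefB coefXn eqxx coef_sum big1.
  by rewrite subr0 => aN; apply/eqP => a0; move: aN; rewrite a0 coef0 => /eqP; rewrite eq_sym oner_eq0.
move=> k _; rewrite /csc mxE coefCM nth_default ?mulr0 //.
by rewrite /N (bigD1 k) //= leq_maxl.
Qed.

End Fc.


Section Core.
Variable K : comRingType.

Definition mk2 (a b c d : K) : 'M[K]_2 :=
  \matrix_(i, j) if i == 0 then (if j == 0 then a else b) else (if j == 0 then c else d).

Lemma ord2 (i : 'I_2) : i = 0 \/ i = 1.
Proof. by case: i => [[|[|//]] Hi]; [left|right]; apply: val_inj. Qed.

Lemma mk2E (A : 'M[K]_2) : A = mk2 (A 0 0) (A 0 1) (A 1 0) (A 1 1).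
Proof.
apply/matrixP => i j; rewrite mxE.
by have [->|->] := ord2 i; have [->|->] := ord2 j.
Qed.

Lemma mk2_entries a b c d : [/\ mk2 a b c d 0 0 = a, mk2 a b c d 0 1 = b,
  mk2 a b c d 1 0 = c & mk2 a b c d 1 1 = d].
Proof. by rewrite !mxE. Qed.

Lemma mk2_inj a b c d a' b' c' d' : mk2 a b c d = mk2 a' b' c' d' ->
  [/\ a = a', b = b', c = c' & d = d'].
Proof.
move=> E; have := mk2_entries a b c d; rewrite E.
by case: (mk2_entries a' b' c' d') => -> -> -> -> [].
Qed.

Lemma mk2_mul a b c d a' b' c' d' : mk2 a b c d *m mk2 a' b' c' d' =
  mk2 (a * a' + b * c') (a * b' + b * d') (c * a' + d * c') (c * b' + d * d').
Proof.
apply/matrixP => i j; rewrite !mxE big_ord_recl big_ord_recl big_ord0 !mxE addr0.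
by have [->|->] := ord2 i; have [->|->] := ord2 j.
Qed.

Lemma mk2_add a b c d a' b' c' d' : mk2 a b c d + mk2 a' b' c' d' =
  mk2 (a + a') (b + b') (c + c') (d + d').
Proof.
apply/matrixP => i j; rewrite !mxE.
by have [->|->] := ord2 i; have [->|->] := ord2 j.
Qed.

Lemma mk2_opp a b c d : - mk2 a b c d = mk2 (- a) (- b) (- c) (- d).
Proof.
apply/matrixP => i j; rewrite !mxE.
by have [->|->] := ord2 i; have [->|->] := ord2 j.
Qed.

Lemma mk2_scale k a b c d : k *: mk2 a b c d = mk2 (k * a) (k * b) (k * c) (k * d).
Proof.
apply/matrixP => i j; rewrite !mxE.
by have [->|->] := ord2 i; have [->|->] := ord2 j.
Qed.

Lemma mk2_tr a b c d : \tr (mk2 a b c d) = a + d.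
Proof. by rewrite /mxtrace big_ord_recl big_ord_recl big_ord0 !mxE addr0. Qed.

Lemma mk2_d01 (a : K) : a *: delta_mx 0 1 = mk2 0 a 0 0.
Proof.
apply/matrixP => i j; rewrite !mxE.
by have [->|->] := ord2 i; have [->|->] := ord2 j; rewrite /= ?mulr0 ?mulr1.
Qed.

Lemma mk2_d10 (a : K) : a *: delta_mx 1 0 = mk2 0 0 a 0.
Proof.
apply/matrixP => i j; rewrite !mxE.
by have [->|->] := ord2 i; have [->|->] := ord2 j; rewrite /= ?mulr0 ?mulr1.
Qed.

Definition lbrK (P Q : 'M[K]_2) := P *m Q - Q *m P.

Lemma mk2_lbr a b c d a' b' c' d' : lbrK (mk2 a b c d) (mk2 a' b' c' d') =
  mk2 (b * c' - b' * c) (a * b' + b * d' - (a' * b + b' * d))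
      (c * a' + d * c' - (c' * a + d' * c)) (c * b' - c' * b).
Proof.
rewrite /lbrK !mk2_mul mk2_opp mk2_add; congr mk2; ring.
Qed.

End Core.


Section Core2.
Variable K : fieldType.
Hypothesis two : (2%:R : K) != 0.

Lemma eq_by (P Q T : K) : P = Q -> T = Q - P -> T = 0.
Proof. by move=> -> ->; rewrite subrr. Qed.

Lemma canc (a x : K) : a != 0 -> a * x = 0 -> x = 0.
Proof. by move=> a0 /eqP; rewrite mulf_eq0 (negbTE a0) => /eqP. Qed.

Ltac sby e := first [ apply: (eq_by e); ring | apply: (eq_by (esym e)); ring ].

Lemma core1 (a b x00 x01 x10 x11 y00 y01 y10 y11 : K) :
  a != 0 -> b != 0 -> x00 + x11 = 0 -> y00 + y11 = 0 ->
  lbrK (mk2 x00 x01 x10 x11) (mk2 0 a 0 0) = lbrK (mk2 0 a 0 0) (mk2 x00 x01 x10 x11) ->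
  lbrK (mk2 y00 y01 y10 y11) (mk2 0 0 b 0) = lbrK (mk2 0 0 b 0) (mk2 y00 y01 y10 y11) ->
  lbrK (mk2 x00 x01 x10 x11) (mk2 0 0 b 0) = lbrK (mk2 0 a 0 0) (mk2 y00 y01 y10 y11) ->
  mk2 x00 x01 x10 x11 = (x01 / a) *: mk2 0 a 0 0 /\
  mk2 y00 y01 y10 y11 = (x01 / a) *: mk2 0 0 b 0.
Proof.
move=> a0 b0 tx ty.
rewrite !mk2_lbr => /mk2_inj [e1 e2 e3 e4] /mk2_inj [f1 f2 f3 f4] /mk2_inj [g1 g2 g3 g4].
have two_a : 2%:R * a != 0 by rewrite mulf_neq0.
have two_b : 2%:R * b != 0 by rewrite mulf_neq0.
have x10_0 : x10 = 0.
  by apply: (canc two_a); sby e1.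
have x00_11 : x00 - x11 = 0.
  by apply: (canc two_a); sby e2.
have x00_0 : x00 = 0.
  apply: (canc two); have -> : 2%:R * x00 = (x00 - x11) + (x00 + x11) by ring.
  by rewrite x00_11 tx addr0.
have x11_0 : x11 = 0 by move: tx; rewrite x00_0 add0r.
have y01_0 : y01 = 0.
  by apply: (canc two_b); sby f1.
have y00_11 : y00 - y11 = 0.
  by apply: (canc two_b); sby f3.
have y00_0 : y00 = 0.
  apply: (canc two); have -> : 2%:R * y00 = (y00 - y11) + (y00 + y11) by ring.
  by rewrite y00_11 ty addr0.
have y11_0 : y11 = 0 by move: ty; rewrite y00_0 add0r.
have y10E : y10 = x01 / a * b.
  apply: (mulfI a0).
  have -> : a * (x01 / a * b) = x01 * b by field.
  by move: g1; rewrite mul0r subr0 mulr0 subr0 => ->.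
rewrite !mk2_scale x10_0 x00_0 x11_0 y01_0 y00_0 y11_0 y10E !mulr0 divfK //.
Qed.

Lemma core2 (a b F x00 x01 x10 x11 z00 z01 z10 z11 : K) :
  a != 0 -> b != 0 -> x00 + x11 = 0 -> z00 + z11 = 0 ->
  lbrK (mk2 z00 z01 z10 z11) (mk2 0 a 0 0) = lbrK (mk2 x00 x01 x10 x11) (F *: mk2 0 a 0 0) ->
  lbrK (mk2 z00 z01 z10 z11) (mk2 0 0 b 0) = lbrK (mk2 x00 x01 x10 x11) (F *: mk2 0 0 b 0) ->
  mk2 z00 z01 z10 z11 = F *: mk2 x00 x01 x10 x11.
Proof.
move=> a0 b0 tx tz.
rewrite !mk2_scale !mk2_lbr => /mk2_inj [e1 e2 e3 e4] /mk2_inj [f1 f2 f3 f4].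
have two_a : 2%:R * a != 0 by rewrite mulf_neq0.
have z10E : z10 - F * x10 = 0.
  by apply: (canc a0); sby e4.
have z01E : z01 - F * x01 = 0.
  by apply: (canc b0); sby f1.
have tz' : z11 = - z00 by apply/eqP; rewrite -addr_eq0 addrC tz.
have tx' : x11 = - x00 by apply/eqP; rewrite -addr_eq0 addrC tx.
rewrite tz' tx' in e2 *.
have z00E : z00 - F * x00 = 0.
  by apply: (canc two_a); sby e2.
have z11E : - z00 - F * - x00 = 0.
  by rewrite mulrN opprK addrC -opprB z00E oppr0.
by congr mk2; apply/eqP; rewrite -subr_eq0; apply/eqP.
Qed.
End Core2.


Section Main.
Variable R : realType.
Local Notation C := (Cx R).
Local Notation M := (Mat R).
Local Notation K := {fraction {poly C}}.
Local Notation tf := (@FracField.tofrac {poly C}).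

Definition iota (x : M) : 'M[K]_2 := map_mx tf x.

Lemma two_neq0 : (2%:R : K) != 0.
Proof.
rewrite -(tofrac1) -tofracMn tofrac_eq0 -polyCMn polyC_eq0.
by rewrite /Cx pnatr_eq0.
Qed.

Lemma iota_lbr x y : iota (lbr x y) = lbrK (iota x) (iota y).
Proof. by rewrite /iota /lbr /lbrK map_mxB !map_mxM. Qed.

Lemma iota_tr x : sl2 x -> \tr (iota x) = 0.
Proof. by rewrite /iota /sl2 trace_map_mx => ->; rewrite rmorph0. Qed.

Lemma iota_inj : injective iota.
Proof.
move=> x y E; apply/matrixP => i j.
have := congr1 (fun A : 'M[K]_2 => A i j) E; rewrite !mxE => /eqP.
by rewrite tofrac_eq => /eqP.
Qed.

Lemma iotaZ (p : {poly C}) x : iota (p *: x) = tf p *: iota x.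
Proof. by rewrite /iota map_mxZ. Qed.

Lemma iotaD x y : iota (x + y) = iota x + iota y.
Proof. by rewrite /iota map_mxD. Qed.

Lemma iota_d01 a : iota (a *: delta_mx 0 1) = mk2 0 (tf a) 0 0.
Proof.
rewrite -mk2_d01; apply/matrixP => i j; rewrite !mxE.
by have [->|->] := ord2 i; have [->|->] := ord2 j; rewrite /= ?mulr0 ?mulr1 ?rmorph0.
Qed.

Lemma iota_d10 a : iota (a *: delta_mx 1 0) = mk2 0 0 (tf a) 0.
Proof.
rewrite -mk2_d10; apply/matrixP => i j; rewrite !mxE.
by have [->|->] := ord2 i; have [->|->] := ord2 j; rewrite /= ?mulr0 ?mulr1 ?rmorph0.
Qed.

Lemma classify (hh : M -> Prop) (h : M -> M) :
  (forall x, hh x -> sl2 x) -> (forall x, hh x -> sl2 (h x)) ->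
  (forall x y, hh x -> hh y -> h (lbr x y) = lbr (h x) y /\ h (lbr x y) = lbr x (h y)) ->
  (exists a, a != 0 /\ hh (a *: delta_mx 0 1)) ->
  (exists b, b != 0 /\ hh (b *: delta_mx 1 0)) ->
  exists F : K, forall x, hh x -> iota (h x) = F *: iota x.
Proof.
move=> hs hhs br [a [a0 ha]] [b [b0 hb]].
set u := a *: delta_mx 0 1 in ha *; set v := b *: delta_mx 1 0 in hb *.
have a0' : tf a != 0 by rewrite tofrac_eq0.
have b0' : tf b != 0 by rewrite tofrac_eq0.
have Eu : iota u = mk2 0 (tf a) 0 0 by exact: iota_d01.
have Ev : iota v = mk2 0 0 (tf b) 0 by exact: iota_d10.
have H1 : lbrK (iota (h u)) (iota u) = lbrK (iota u) (iota (h u)).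
  by rewrite -!iota_lbr; have [<- <-] := br u u ha ha.
have H2 : lbrK (iota (h v)) (iota v) = lbrK (iota v) (iota (h v)).
  by rewrite -!iota_lbr; have [<- <-] := br v v hb hb.
have H3 : lbrK (iota (h u)) (iota v) = lbrK (iota u) (iota (h v)).
  by rewrite -!iota_lbr; have [<- <-] := br u v ha hb.
have tX := iota_tr (hhs u ha); have tY := iota_tr (hhs v hb).
move: H1 H2 H3 tX tY; rewrite (mk2E (iota (h u))) (mk2E (iota (h v))) Eu Ev !mk2_tr.
move=> H1 H2 H3 tX tY.
have [HX HY] := core1 two_neq0 a0' b0' tX tY H1 H2 H3.
rewrite -(mk2E (iota (h u))) -Eu in HX; rewrite -(mk2E (iota (h v))) -Ev in HY.
exists (iota (h u) 0 1 / tf a) => x hx.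
set F := iota (h u) 0 1 / tf a in HX HY *.
have H4 : lbrK (iota (h x)) (iota u) = lbrK (iota x) (F *: iota u).
  by rewrite -HX -!iota_lbr; have [<- <-] := br x u hx ha.
have H5 : lbrK (iota (h x)) (iota v) = lbrK (iota x) (F *: iota v).
  by rewrite -HY -!iota_lbr; have [<- <-] := br x v hx hb.
have tZ := iota_tr (hhs x hx); have tx := iota_tr (hs x hx).
move: H4 H5 tZ tx; rewrite (mk2E (iota (h x))) (mk2E (iota x)) Eu Ev !mk2_tr.
move=> H4 H5 tZ tx.
exact (core2 two_neq0 a0' b0' tx tZ H4 H5).
Qed.

End Main.


Section Thm.
Variable R : realType.
Local Notation C := (Cx R).
Local Notation M := (Mat R).
Local Notation K := {fraction {poly C}}.
Local Notation tf := (@FracField.tofrac {poly C}).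
Variable L : M -> Prop.
Hypothesis hL : lie_subalg L (@sl2 R).
Hypothesis hfc : fin_codim L (@sl2 R).

Local Notation fcs kk := (fc_subalg kk L).

Lemma admP (p : pair R) : admissible L p ->
  [/\ fcs p.2, (forall x, p.2 x -> L (p.1 x)), glin p.2 p.1 &
   (forall x y, p.2 x -> p.2 y ->
      p.1 (lbr x y) = lbr (p.1 x) y /\ p.1 (lbr x y) = lbr x (p.1 y))].
Proof. by case: p => h hh [? [? [? ?]]]. Qed.

Lemma fcs_sub kk : fcs kk -> subspace kk.
Proof. by case=> [[_ []]]. Qed.

Lemma fcs_sl2 kk : fcs kk -> fin_codim kk (@sl2 R).
Proof. by case=> _ fk; apply: (fc_trans fk hfc); case: hL. Qed.

Lemma fcs_nz2 kk : fcs kk ->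
  (exists a, a != 0 /\ kk (a *: delta_mx 0 1)) /\
  (exists b, b != 0 /\ kk (b *: delta_mx 1 0)).
Proof.
move=> fk; split; apply: nz_elem => //; [exact: fcs_sub | exact: fcs_sl2 | exact: fcs_sub | exact: fcs_sl2].
Qed.

Lemma fcs_nz kk : fcs kk -> exists x, kk x /\ x != 0.
Proof.
move=> /fcs_nz2 [[a [a0 ka]] _]; exists (a *: delta_mx 0 1); split => //.
apply/eqP => /matrixP /(_ 0 1); rewrite !mxE /= mulr1 => a0'.
by rewrite a0' eqxx in a0.
Qed.

Lemma fcs_cov A : fcs A -> exists n (v : 'I_n -> M), forall z, L z ->
     exists c : 'I_n -> C, A (z - \sum_(i < n) csc (c i) (v i)).
Proof. by case=> _ [n [v [_ H]]]; exists n, v. Qed.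

Lemma fcs_and A B : fcs A -> fcs B -> fcs (fun x => A x /\ B x).
Proof.
move=> fA fB; apply: (pre_fc (B := L) (g := id) fA (fcs_sub fB) (fcs_cov fB)) => //.
- by move=> x Ax; case: fA => [[AL _] _]; exact: AL.
- by case: fB => [[_ [_ Bb]] _] x y _ _; exact: Bb.
Qed.

Lemma fcs_comp (p q : pair R) (D : M -> Prop) : admissible L p -> admissible L q ->
  fcs D -> (forall x, D x -> p.2 x /\ q.2 x) ->
  fcs (fun x => D x /\ p.2 (q.1 x)).
Proof.
move=> /admP [fp _ _ _] /admP [fq qL ql qb] fD Dpq.
apply: (pre_fc (B := L) fD (fcs_sub fp) (fcs_cov fp)).
- by move=> x /Dpq [_]; exact: qL.
- by move=> c x y /Dpq [_ qx] /Dpq [_ qy]; exact: ql.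
- move=> x y /Dpq [_ qx] /Dpq [py qy] pqx _.
  have [-> _] := qb x y qx qy.
  by case: fp => [[_ [_ pb]] _]; exact: pb.
Qed.

Definition mulby (F : K) (p : pair R) := forall x, p.2 x -> iota (p.1 x) = F *: iota x.

Lemma adm_mulby p : admissible L p -> exists F, mulby F p.
Proof.
move=> /admP [fp pL pl pb].
have [hA hB] := fcs_nz2 fp.
have Lsl : forall x, L x -> sl2 x by case: hL.
have [F HF] := classify (h := p.1) (hh := p.2) (fun x px => Lsl x (proj1 (proj1 fp) x px))
   (fun x px => Lsl _ (pL x px)) pb hA hB.
by exists F.
Qed.

Lemma mulby_uniq (D : M -> Prop) (F G : K) : (exists x, D x /\ x != 0) ->
  (forall x, D x -> F *: iota x = G *: iota x) -> F = G.
Proof.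
move=> [x [Dx x0]] H; move: (H x Dx) => /eqP; rewrite -subr_eq0 -scalerBl scaler_eq0.
case/orP; first by rewrite subr_eq0 => /eqP.
move=> /eqP ix0; exfalso; move/eqP: x0; apply; apply: iota_inj; rewrite ix0.
by rewrite /iota map_mx0.
Qed.

Definition Phi (p : pair R) : K := epsilon (inhabits 0) (fun F => mulby F p).

Lemma Phi_spec p : admissible L p -> mulby (Phi p) p.
Proof. by move=> /adm_mulby H; exact: (epsilon_spec (inhabits 0) (fun F => mulby F p) H). Qed.

Lemma Phi_eq p F : (exists x, p.2 x /\ x != 0) -> mulby F p -> Phi p = F.
Proof.
move=> nz HF.
have HP : mulby (Phi p) p by exact: (epsilon_spec (inhabits 0) (fun F => mulby F p) (ex_intro _ F HF)).
apply: (mulby_uniq nz) => x px; by rewrite -HP // -HF.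
Qed.

End Thm.


Section FracE.
Local Open Scope quotient_scope.
Lemma fracE (Rd : idomainType) (x : {fraction Rd}) :
  exists n d, d != 0 /\ x = (FracField.tofrac n) / (FracField.tofrac d).
Proof.
elim/quotW: x => r.
exists (r.1), (r.2); split; first exact: denom_ratioP.
have d0 : FracField.tofrac r.2 != 0 by rewrite tofrac_eq0 denom_ratioP.
apply: (mulIf d0); rewrite divfK //.
unlock FracField.tofrac.
rewrite -[X in X = _]FracField.pi_mul /FracField.mulf.
apply/eqmodP => /=. rewrite FracField.equivfE /=.
rewrite !numden_Ratio ?mulf_neq0 ?oner_neq0 ?denom_ratioP //.
by rewrite !mulr1 mulrC.
Qed.
End FracE.

Section Surj.
Variable R : realType.
Local Notation C := (Cx R).
Local Notation M := (Mat R).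
Local Notation K := {fraction {poly C}}.
Local Notation tf := (@FracField.tofrac {poly C}).

Definition dv (d : {poly C}) (x : M) : M := map_mx (fun e => e %/ d) x.

Lemma tr2 (x : M) : \tr x = x 0 0 + x 1 1.
Proof. by rewrite {1}(mk2E x) mk2_tr. Qed.

Lemma dv_lin d (c : C) x y : dv d (csc c x + y) = csc c (dv d x) + dv d y.
Proof.
apply/matrixP => i j; rewrite !mxE divpD mul_polyC divpZl -mul_polyC //.
Qed.

Lemma dvK d y : d != 0 -> dv d (d *: y) = y.
Proof. by move=> d0; apply/matrixP => i j; rewrite !mxE mulKp. Qed.

Lemma dv_sl2 d x : sl2 x -> sl2 (dv d x).
Proof. by rewrite /sl2 !tr2 !mxE -divpD => ->; rewrite div0p. Qed.

Lemma dv_div d (x : M) : (forall i j, d %| x i j) -> x = d *: dv d x.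
Proof. by move=> H; apply/matrixP => i j; rewrite !mxE mulrC divpK. Qed.

Lemma lbrZZ (a b : {poly C}) (P Q : M) : lbr (a *: P) (b *: Q) = (a * b) *: lbr P Q.
Proof.
by rewrite /lbr -!scalemxAl -!scalemxAr !scalerA scalerBr [b * a]mulrC.
Qed.

Lemma div_lbr d (x y : M) : (forall i j, d %| x i j) -> forall i j, d %| (lbr x y) i j.
Proof.
move=> H i j; rewrite /lbr !mxE; apply: dvdp_sub.
  apply: (big_ind (fun p => d %| p)); [exact: dvdp0 | move=> p q hp hq; exact: dvdp_add | move=> k _; exact: dvdp_mulr].
apply: (big_ind (fun p => d %| p)); [exact: dvdp0 | move=> p q hp hq; exact: dvdp_add | move=> k _; exact: dvdp_mull].
Qed.

Definition Bij (d : {poly C}) (i j : 'I_2) (x : M) := d %| x i j.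

Lemma Bij_sub d i j : subspace (Bij d i j).
Proof.
split; first by rewrite /Bij mxE dvdp0.
split; first by move=> x y; rewrite /Bij mxE; exact: dvdp_add.
by move=> c x; rewrite /Bij /csc mxE; exact: dvdp_mull.
Qed.


Lemma covB (d : {poly C}) (i j : 'I_2) (x : M) : d != 0 ->
  exists c : 'I_(size d) -> C,
    Bij d i j (x - \sum_(k < size d) csc (c k) ('X^k *: delta_mx i j)).
Proof.
move=> d0; exists (fun k => (x i j %% d)`_k).
rewrite /Bij mxE mxE summxE.
have -> : \sum_(k < size d) csc ((x i j %% d)`_k) ('X^k *: delta_mx i j) i j = x i j %% d.
  have Hs : (size (x i j %% d)%R <= size d)%N by apply: ltnW; rewrite ltn_modp.
  rewrite -[RHS](_ : \poly_(k < size d) (x i j %% d)`_k = _); last first.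
    apply/polyP => k; rewrite coef_poly; case: ltnP => // hk.
    by rewrite nth_default // (leq_trans Hs hk).
  rewrite poly_def; apply: eq_bigr => k _.
  by rewrite /csc !mxE !eqxx mulr1 mul_polyC.
by rewrite {1}(divp_eq (x i j) d) addrK dvdp_mulIr.
Qed.

End Surj.

Section Surj2.
Variable R : realType.
Local Notation C := (Cx R).
Local Notation M := (Mat R).
Local Notation K := {fraction {poly C}}.
Local Notation tf := (@FracField.tofrac {poly C}).
Variable L : M -> Prop.
Hypothesis hL : lie_subalg L (@sl2 R).
Hypothesis hfc : fin_codim L (@sl2 R).

Lemma fc_and (B D A : M -> Prop) n (v : 'I_n -> M) : subspace D -> subspace A ->
  fin_codim D B -> (forall x, D x -> B x) ->
  (forall x, D x -> exists c : 'I_n -> C, A (x - \sum_(i < n) csc (c i) (v i))) ->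
  fin_codim (fun x => D x /\ A x) B /\ subspace (fun x => D x /\ A x).
Proof.
move=> sD sA fD DB H; split.
  exact: (fc_trans (fc_pre (g := id) sD (fun c x y _ _ => erefl) sA H) fD DB).
case: sD => [D0 [DD DS]]; case: sA => [A0 [AD AS]].
split => //; split.
  by move=> x y [? ?] [? ?]; split; [exact: DD | exact: AD].
by move=> c x [? ?]; split; [exact: DS | exact: AS].
Qed.

Lemma surj (r : K) : exists p, admissible L p /\ Phi p = r.
Proof.
have [n [d [d0 ->]]] := fracE r.
case: (hL) => LL [sL Lb].
pose S4 := fun x => (((L x /\ Bij d 0 0 x) /\ Bij d 0 1 x) /\ Bij d 1 0 x) /\ Bij d 1 1 x.
have fS4 : fin_codim S4 L /\ subspace S4.
  have fL : fin_codim L L := fc_refl (proj1 sL).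
  have [f1 s1] := fc_and sL (Bij_sub d 0 0) fL (fun x h => h) (fun x _ => covB 0 0 x d0).
  have [f2 s2] := fc_and s1 (Bij_sub d 0 1) f1 (fun x h => h.1) (fun x _ => covB 0 1 x d0).
  have [f3 s3] := fc_and s2 (Bij_sub d 1 0) f2 (fun x h => h.1.1) (fun x _ => covB 1 0 x d0).
  exact: (fc_and s3 (Bij_sub d 1 1) f3 (fun x h => h.1.1.1) (fun x _ => covB 1 1 x d0)).
have S4div : forall x, S4 x -> forall i j, d %| x i j.
  move=> x [[[[_ h00] h01] h10] h11] i j.
  by have [->|->] := ord2 i; have [->|->] := ord2 j.
have S4L : forall x, S4 x -> L x by move=> x [[[[]]]].
have fcs4 : fc_subalg S4 L.
  split; last exact: fS4.1.
  split; first exact S4L.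
  split; first exact fS4.2.
  move=> x y Sx Sy; have dl := div_lbr y (S4div x Sx).
  split; [split; [split; [split|]|]|]; rewrite /Bij ?dl //.
  exact: Lb (S4L x Sx) (S4L y Sy).
pose g := fun x : M => n *: dv d x.
have gl : glin S4 g.
  by move=> c x y _ _; rewrite /g dv_lin scalerDr /csc !scalerA mulrC.
have gbr : forall x y, S4 x -> S4 y ->
    g (lbr x y) = lbr (g x) y /\ g (lbr x y) = lbr x (g y).
  move=> x y Sx Sy; rewrite /g (dv_div (S4div x Sx)) (dv_div (S4div y Sy)).
  set x' := dv d x; set y' := dv d y.
  rewrite !dvK // lbrZZ -scalerA dvK // !lbrZZ scalerA; split => //.
  by rewrite mulrC.
pose hh := fun x => S4 x /\ L (g x).
have fhh : fc_subalg hh L.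
  apply: (pre_fc (B := @sl2 R) (g := g) fcs4 sL) => //.
  - by case: hfc => m [v [_ H]]; exists m, v.
  - move=> x Sx; rewrite /sl2 /g mxtraceZ.
    by rewrite (dv_sl2 d (LL x (S4L x Sx))) mulr0.
  - move=> x y Sx Sy Lgx _; rewrite (gbr x y Sx Sy).1.
    exact: Lb Lgx (S4L y Sy).
exists (g, hh); split.
  split; first exact: fhh.
  split; first by move=> x [].
  split; first by move=> c x y [Sx _] [Sy _]; exact: gl.
  by move=> x y [Sx _] [Sy _]; exact: gbr.
apply: Phi_eq; first exact: (fcs_nz hL hfc fhh).
move=> x [Sx _] /=; rewrite /g {2}(dv_div (S4div x Sx)) !iotaZ scalerA divfK //.
by rewrite tofrac_eq0.
Qed.

End Surj2.


Unset Implicit Arguments.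
Theorem theorem6p9 (R : realType) (L : Mat R -> Prop) :
  lie_subalg L (@sl2 R) -> fin_codim L (@sl2 R) ->
  (* I(L) is commutative *)
  (forall p q, admissible L p -> admissible L q -> pequiv L (pmul p q) (pmul q p)) /\
  (* I(L) is isomorphic, as an associative C-algebra, to C(lambda) *)
  exists Phi : pair R -> {fraction {poly Cx R}},
    induces_alg_iso L (@cemb R) Phi.
Proof.
move=> hL hfc; split.
  move=> p q ap aq.
  have [Fp HFp] := adm_mulby hL hfc ap.
  have [Fq HFq] := adm_mulby hL hfc aq.
  have [fp _ _ _] := admP ap; have [fq _ _ _] := admP aq.
  have D := fcs_and fp fq.
  have D1 := fcs_comp ap aq D (fun x h => h).
  have D2 := fcs_comp aq ap D1 (fun x h => conj h.1.2 h.1.1).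
  exists (fun x => ((p.2 x /\ q.2 x) /\ p.2 (q.1 x)) /\ q.2 (p.1 x)).
  split; first exact: D2.
  split; first by move=> x [[[px qx] pqx] qpx].
  move=> x [[[px qx] pqx] qpx]; apply: iota_inj => /=.
  by rewrite (HFp (q.1 x)) // (HFq x) // (HFq (p.1 x)) // (HFp x) // !scalerA mulrC.
exists (@Phi R); split.
  move=> p q ap aq; split.
    move=> [kk [fk [sub eq]]].
    apply: (mulby_uniq (fcs_nz hL hfc fk)) => x kx.
    rewrite -(Phi_spec hL hfc ap (sub x kx).1) -(Phi_spec hL hfc aq (sub x kx).2).
    by rewrite eq.
  move=> E; have [fp _ _ _] := admP ap; have [fq _ _ _] := admP aq.
  exists (fun x => p.2 x /\ q.2 x); split; first exact: fcs_and fp fq.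
  split; first by [].
  move=> x [px qx]; apply: iota_inj.
  by rewrite (Phi_spec hL hfc ap px) (Phi_spec hL hfc aq qx) E.
split; first exact: surj hL hfc.
split.
  move=> p q ap aq; have [fp _ _ _] := admP ap; have [fq _ _ _] := admP aq.
  apply: Phi_eq; first exact: (fcs_nz hL hfc (fcs_and fp fq)).
  move=> x [px qx] /=.
  by rewrite iotaD (Phi_spec hL hfc ap px) (Phi_spec hL hfc aq qx) scalerDl.
split.
  move=> c p ap; have [fp _ _ _] := admP ap.
  apply: Phi_eq; first exact: (fcs_nz hL hfc fp).
  move=> x px /=.
  by rewrite /csc iotaZ (Phi_spec hL hfc ap px) scalerA.
move=> p q ap aq; have [fp _ _ _] := admP ap; have [fq _ _ _] := admP aq.
have D1 := fcs_comp ap aq (fcs_and fp fq) (fun x h => h).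
apply: Phi_eq.
  have [x [[[px qx] pqx] x0]] := fcs_nz hL hfc D1.
  by exists x.
move=> x [px [qx pqx]] /=.
by rewrite (Phi_spec hL hfc ap pqx) (Phi_spec hL hfc aq qx) scalerA.
Qed.
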